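(* Every solution of $x_{n+1}=\sum_{j=0}^{k-1}a_jx_{n-j}$ converges to $0$ (equivalently, all eigenvalues of $J_0$ lie in the open unit disk) if and only if there exists $m\in\mathbb{N}=\{0,1,2,\dots\}$ with $\|p_m\|_{\ell_1}<2$, i.e. $\sum_{j=0}^{k-1}|b_{m,j}|<1$.
   Context: Let $k\ge 2$, $a_0,\dots,a_{k-1}\in\mathbb{R}$, $a_0\ne0$. $J_0$ is the $k\times k$ companion matrix with first row $(a_0,\dots,a_{k-1})$, ones at positions $(i+1,i)$, zeros elsewhere. Define $b_{0,j}=a_j$ ($0\le j\le k-1$) and for $m\ge0$: $b_{m+1,j}=a_jb_{m,0}+b_{m,j+1}$ ($0\le j\le k-2$), $b_{m+1,k-1}=a_{k-1}b_{m,0}$ (equivalently, $[b_{m,0},\dots,b_{m,k-1}]^t=(J_0^t)^m[a_0,\dots,a_{k-1}]^t$). Let $p_m(x)=x^{k+m}-\sum_{j=0}^{k-1}b_{m,j}x^{k-j-1}$. For a polynomial $p$, $\|p\|_{\ell_1}$ is the sum of the absolute values of its coefficients. *)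

(* Defs.v *)
From HB Require Import structures.
From mathcomp Require Import all_boot all_order all_algebra.
From mathcomp Require Import all_classical all_reals all_analysis.
Set Implicit Arguments. Unset Strict Implicit. Unset Printing Implicit Defensive.
Import Order.TTheory GRing.Theory Num.Theory.
Local Open Scope ring_scope.

Section Defs.
Variable R : realType.

(* b_{m,j} for 0 <= j <= k-1 (and 0 for j >= k), with the coefficients a_j
   given by a : nat -> R (only a 0, ..., a (k-1) are used).
   b_{0,j} = a_j ;  b_{m+1,j} = a_j b_{m,0} + b_{m,j+1}  (j <= k-2),
   b_{m+1,k-1} = a_{k-1} b_{m,0}  (the convention b_{m,k} = 0). *)
Fixpoint bcoef (k : nat) (a : nat -> R) (m j : nat) : R :=
  match m with
  | 0 => if (j < k)%N then a j else 0
  | m'.+1 => if (j < k)%N then a j * bcoef k a m' 0 + bcoef k a m' j.+1 else 0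
  end.

Definition pm (k : nat) (a : nat -> R) (m : nat) : {poly R} :=
  'X^(k + m) - \sum_(j < k) (bcoef k a m j)%:P * 'X^(k - j - 1).

Definition l1norm (p : {poly R}) : R := \sum_(i < size p) `|p`_i|.

Definition is_solution (k : nat) (a : nat -> R) (x : nat -> R) : Prop :=
  forall n : nat, (k.-1 <= n)%N -> x n.+1 = \sum_(j < k) a j * x (n - j)%N.
End Defs.

(* Main.v *)
Require Import Defs.
From HB Require Import structures.
From mathcomp Require Import all_boot all_order all_algebra.
From mathcomp Require Import all_classical all_reals all_analysis.
Import Order.TTheory GRing.Theory Num.Theory.
Import numFieldNormedType.Exports.
From mathcomp Require Import zify lra.
Local Open Scope classical_set_scope.
Local Open Scope ring_scope.

Section H.
Variable R : realType.
Implicit Types a x : nat -> R.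

Lemma bcoef_ge k a m j : (k <= j)%N -> bcoef k a m j = 0.
Proof. by move=> H; case: m => [|m] /=; rewrite ltnNge H. Qed.

Lemma rep k a x : (0 < k)%N -> is_solution k a x ->
  forall m n, (k.-1 <= n)%N ->
  x (n + m).+1 = \sum_(j < k) bcoef k a m j * x (n - j)%N.
Proof.
case: k => [//|k'] _ Hx; elim=> [|m IH] n Hn.
  rewrite addn0 Hx //; apply: eq_bigr => j _; by rewrite /= ltn_ord.
rewrite addnS -addSn IH; last by apply: leqW.
rewrite big_ord_recl /= subn0 Hx // big_distrr /=.
under [RHS]eq_bigr => j _ do rewrite /= ltn_ord mulrDl.
rewrite big_split /= [X in _ = _ + X]big_ord_recr /= (@bcoef_ge k'.+1 a m k'.+1) // mul0r addr0.
congr (_ + _).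
by apply: eq_bigr => j _; rewrite mulrA (mulrC (bcoef _ _ _ _)).
Qed.

Lemma qpoly k a m :
  \sum_(j < k) (bcoef k a m j)%:P * 'X^(k - j - 1) =
  \poly_(i < k) bcoef k a m (k - 1 - i)%N :> {poly R}.
Proof.
apply/polyP => i; rewrite coef_sum coef_poly.
under eq_bigr do rewrite coefCM coefXn.
case: ifP => Hi.
  have Hj : (k - 1 - i < k)%N by move: Hi; lia.
  rewrite (bigD1 (Ordinal Hj)) //= big1 ?addr0.
    by rewrite (_ : i == _) ?mulr1 //; apply/eqP; lia.
  move=> j Hne; rewrite (_ : (i == _) = false) ?mulr0 //.
  apply/negbTE; apply: contra Hne => /eqP Hij; apply/eqP/val_inj => /=; move: (ltn_ord j) Hi; lia.
rewrite big1 // => j _; rewrite (_ : (i == _) = false) ?mulr0 //.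
apply/negbTE/eqP; move: (ltn_ord j) Hi => /=; lia.
Qed.

Lemma l1norm_pm k a m : (0 < k)%N ->
  l1norm (pm k a m) = 1 + \sum_(j < k) `|bcoef k a m j|.
Proof.
move=> Hk; rewrite /l1norm /pm qpoly.
set q := \poly_(i < k) _.
have Hq : (size q <= k)%N by apply: size_poly.
have Hs : size ('X^(k + m) - q) = (k + m).+1.
  rewrite size_polyDl size_polyXn // size_polyN; apply: leq_trans Hq _.
  exact: leq_addr.
rewrite Hs big_ord_recr /= coefD coefN coefXn eqxx coef_poly.
rewrite (_ : (k + m < k)%N = false); last by lia.
rewrite subr0 normr1 addrC; congr (_ + _).
transitivity (\sum_(i < k + m) `|if (i < k)%N then bcoef k a m (k - 1 - i) else 0|).
  apply: eq_bigr => i _; rewrite coefD coefN coefXn coef_poly.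
  by rewrite (_ : (nat_of_ord i == k + m)%N = false) ?sub0r ?normrN //; apply/negbTE; rewrite neq_ltn ltn_ord.
rewrite (bigID (fun i : 'I_(k+m) => (i < k)%N)) /= [X in _ + X]big1 ?addr0; last first.
  by move=> i /negbTE ->; rewrite normr0.
rewrite -(big_ord_widen _ (fun i => `|if (i < k)%N then bcoef k a m (k - 1 - i) else 0|)) ?leq_addr //.
rewrite (reindex_inj rev_ord_inj) /=.
apply: eq_bigr => i _; have Hi := ltn_ord i.
rewrite (_ : (k - i.+1 < k)%N = true); last by lia.
congr `|bcoef _ _ _ _|; lia.
Qed.

Fixpoint hist k a (init : nat -> R) (n : nat) : seq R :=
  match n with
  | 0 => [:: init 0%N]
  | n'.+1 => (if (n'.+1 < k)%N then init n'.+1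
              else \sum_(j < k) a j * nth 0 (hist k a init n') j) :: hist k a init n'
  end.

Definition sol k a init n := head 0 (hist k a init n).

Lemma hist_nth k a init n j : (j <= n)%N -> nth 0 (hist k a init n) j = sol k a init (n - j).
Proof.
elim: n j => [|n IH] [|j] //= Hj.
by rewrite IH.
Qed.

Lemma sol_init k a init n : (n < k)%N -> sol k a init n = init n.
Proof. by case: n => [|n] // H; rewrite /sol /= H. Qed.

Lemma sol_is k a init : is_solution k a (sol k a init).
Proof.
move=> n Hn; rewrite /sol /= (_ : (n.+1 < k)%N = false); last by lia.
apply: eq_bigr => j _; rewrite hist_nth //; have := ltn_ord j; lia.
Qed.

Lemma dirA k a : (0 < k)%N ->
  (forall x, is_solution k a x -> x n @[n --> \oo] --> (0 : R)) ->
  exists m, \sum_(j < k) `|bcoef k a m j| < 1.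
Proof.
move=> Hk H.
have k0 : 0 <= k%:R :> R := ler0n _ _.
pose e : R := (k%:R + 1)^-1.
have e0 : 0 < e by rewrite invr_gt0; lra.
pose init (j0 : nat) i : R := if i == (k.-1 - j0)%N then 1 else 0.
have Hb : forall (j0 : 'I_k) m, bcoef k a m j0 = sol k a (init j0) (k.-1 + m).+1.
  move=> j0 m; rewrite (rep _ _ _ Hk (sol_is _ _ _)) //.
  rewrite (bigD1 j0) //= big1 ?addr0.
    rewrite sol_init; last by have := ltn_ord j0; lia.
    by rewrite /init eqxx mulr1.
  move=> j Hj; rewrite sol_init; last by have:=ltn_ord j; lia.
  rewrite /init ifF ?mulr0 //; apply: contraNF Hj => /eqP Hj.
  apply/eqP/val_inj => /=; move: Hj; have:=ltn_ord j; have := ltn_ord j0; lia.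
have : \forall m \near \oo, forall j0 : 'I_k, `|bcoef k a m j0| < e.
  apply: filter_forall => j0.
  have := H _ (sol_is k a (init j0)).
  move/cvgr0Pnorm_lt => /(_ e e0) [N _ HN].
  exists N => // m /= Hm; rewrite Hb; apply: HN => /=; lia.
case=> N _ HN; exists N.
apply: (le_lt_trans (y := \sum_(j < k) e)).
  by apply: ler_sum => j _; exact: ltW (HN N (leqnn N) j).
rewrite sumr_const card_ord -mulr_natl /e ltr_pdivrMr; lra.
Qed.

Lemma dirB k a m x : (0 < k)%N -> is_solution k a x ->
  \sum_(j < k) `|bcoef k a m j| < 1 -> x n @[n --> \oo] --> (0 : R).
Proof.
move=> Hk Hx Hc.
set c := \sum_(j < k) _ in Hc.
have c0 : 0 <= c by apply: sumr_ge0 => j _; exact: normr_ge0.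
pose L := (k + m)%N.
have L0 : (0 < L)%N by rewrite /L; lia.
pose M0 := \sum_(i < L) `|x i|.
have M00 : 0 <= M0 by apply: sumr_ge0 => j _; exact: normr_ge0.
have Hbd : forall t, `|x t| <= M0 * c ^+ (t %/ L).
  elim/ltn_ind => t IH.
  case: (ltnP t L) => HtL.
    rewrite divn_small // expr0 mulr1.
    rewrite /M0 (bigD1 (Ordinal HtL)) //= lerDl.
    by apply: sumr_ge0 => j _; exact: normr_ge0.
  have Ht : t = ((t - m.+1) + m).+1 by rewrite /L in HtL; lia.
  rewrite {1}Ht (rep _ _ _ Hk Hx); last by rewrite /L in HtL; lia.
  set q := (t %/ L)%N.
  have q1 : (0 < q)%N by rewrite /q divn_gt0.
  apply: (le_trans (ler_norm_sum _ _ _)).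
  apply: (le_trans (y := \sum_(j < k) `|bcoef k a m j| * (M0 * c ^+ q.-1))).
    apply: ler_sum => j _; rewrite normrM; apply: ler_wpM2l => //.
    apply: (le_trans (IH _ _)); first by have := ltn_ord j; lia.
    apply: ler_wpM2l => //; apply: ler_wiXn2l => //; first exact: ltW.
    rewrite leq_divRL // -subn1 mulnBl mul1n.
    have := leq_trunc_div t L; rewrite -/q /L; have := ltn_ord j; lia.
  by rewrite -big_distrl /= -/c mulrCA -exprS prednK.
apply/cvgr0Pnorm_lt => e e0.
have M1 : 0 < M0 + 1 by lra.
pose e' := e / (M0 + 1).
have e'0 : 0 < e' by rewrite /e' divr_gt0.
have h3 : e' * (M0 + 1) = e by rewrite /e' divfK // gt_eqF.
have := @cvg_expr R c; rewrite ger0_norm // => /(_ Hc).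
move/cvgr0Pnorm_lt => /(_ e' e'0) [N _ HN].
exists (N * L)%N => // t /= Ht.
apply: (le_lt_trans (Hbd t)).
have HNt : (N <= t %/ L)%N by rewrite leq_divRL.
have h1 : c ^+ (t %/ L) <= c ^+ N by apply: ler_wiXn2l => //; exact: ltW.
have h2 : c ^+ N < e' by have := HN N (leqnn N); rewrite /= ger0_norm // exprn_ge0.
have h4 : M0 * c ^+ (t %/ L) <= M0 * e'.
  by apply: ler_wpM2l => //; apply: (le_trans h1); exact: ltW.
rewrite mulrDr mulr1 in h3; nra.
Qed.

End H.

Theorem mainTheorem7 (R : realType) (k : nat) (a : nat -> R) :
  (2 <= k)%N -> a 0%N != 0 ->
  ((forall x : nat -> R, is_solution k a x -> x n @[n --> \oo] --> (0 : R)) <->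
   (exists m : nat, l1norm (pm k a m) < 2)).
Proof.
move=> Hk _; have Hk0 : (0 < k)%N by lia.
split.
  move=> H; have [m Hm] := @dirA R k a Hk0 H; exists m.
  by rewrite l1norm_pm //; lra.
case=> m; rewrite l1norm_pm // => Hm x Hx.
apply: (@dirB R k a m x Hk0 Hx); lra.
Qed.
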